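(* Let $\delta>1$, $\gamma>0$, $0<A_u<A_s$ and $0<\rho_u<\rho_s$. For $L>0$ define \[ s^*(L)=\left[\gamma^{-\delta}A_s^{\delta-1}L\right]^{\frac{1}{1+\delta\rho_s}},\qquad u^*(L)=\left[\gamma^{-\delta}A_u^{\delta-1}L\right]^{\frac{1}{1+\delta\rho_u}}. \] Then \[ \frac{\partial}{\partial L}\left[\frac{s^*(L)}{u^*(L)}\right]<0\quad\text{for all }L>0, \] i.e. an increase in the demand for legal services tilts the composition of employed legal workers towards unskilled workers.
   Context: Model of the legal labor market: skilled ($s$) and unskilled ($u$) workers supply labor $j=(w_j/\gamma)^{1/\rho_j}$, where $1/\rho_j$ is the Frisch elasticity of labor supply of type $j$; a competitive firm produces legal services $L=\left[(A_u u)^{\frac{\delta-1}{\delta}}+(A_s s)^{\frac{\delta-1}{\delta}}\right]^{\frac{\delta}{\delta-1}}$ paying marginal products $w_j=A_j^{\frac{\delta-1}{\delta}}(L/j)^{1/\delta}$, with $L>0$ treated as an exogenous demand parameter. $s^*(L),u^*(L)$ are the resulting equilibrium employment levels. The hypotheses $\rho_u<\rho_s$ (skilled labor supply less elastic) and $A_u<A_s$ (skilled labor more productive) are the paper's standing assumptions. *)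

(* Defs.v *)
From Stdlib Require Import Reals.
From Coquelicot Require Import Coquelicot.
Open Scope R_scope.

Definition sstar (delta gamma A_s rho_s L : R) : R :=
  Rpower (Rpower gamma (- delta) * Rpower A_s (delta - 1) * L) (1 / (1 + delta * rho_s)).

Definition ustar (delta gamma A_u rho_u L : R) : R :=
  Rpower (Rpower gamma (- delta) * Rpower A_u (delta - 1) * L) (1 / (1 + delta * rho_u)).

(* Main.v *)
Require Import Defs.
From Stdlib Require Import Reals Lra.
From Coquelicot Require Import Coquelicot.
Open Scope R_scope.

Theorem proposition1 (delta gamma A_u A_s rho_u rho_s : R)
  (Hdelta : 1 < delta) (Hgamma : 0 < gamma)
  (HAu : 0 < A_u) (HA : A_u < A_s)
  (Hrhou : 0 < rho_u) (Hrho : rho_u < rho_s) :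
  forall L : R, 0 < L ->
    ex_derive (fun x => sstar delta gamma A_s rho_s x / ustar delta gamma A_u rho_u x) L /\
    Derive (fun x => sstar delta gamma A_s rho_s x / ustar delta gamma A_u rho_u x) L < 0.
Proof.
  intros L HL.
  unfold sstar, ustar.
  set (Cs := Rpower gamma (- delta) * Rpower A_s (delta - 1)).
  set (Cu := Rpower gamma (- delta) * Rpower A_u (delta - 1)).
  set (a := 1 / (1 + delta * rho_s)).
  set (b := 1 / (1 + delta * rho_u)).
  assert (HCs : 0 < Cs) by (unfold Cs, Rpower; apply Rmult_lt_0_compat; apply exp_pos).
  assert (HCu : 0 < Cu) by (unfold Cu, Rpower; apply Rmult_lt_0_compat; apply exp_pos).
  assert (Hab : a < b).
  { unfold a, b. apply Rmult_lt_compat_l; [lra|]. apply Rinv_lt_contravar.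
    - apply Rmult_lt_0_compat; nra.
    - nra. }
  unfold Rpower.
  assert (HD : is_derive (fun x => exp (a * ln (Cs * x)) / exp (b * ln (Cu * x))) L
     ((exp (a * ln (Cs * L)) / exp (b * ln (Cu * L))) * ((a - b) / L))).
  { auto_derive.
    - repeat split; try nra; apply Rgt_not_eq, exp_pos.
    - assert (exp (b * ln (Cu * L)) <> 0) by apply Rgt_not_eq, exp_pos.
      field. repeat split; lra. }
  split.
  - eexists; exact HD.
  - replace (Derive _ L) with ((exp (a * ln (Cs * L)) / exp (b * ln (Cu * L))) * ((a - b) / L)) by (symmetry; apply is_derive_unique; exact HD).
    assert (0 < exp (a * ln (Cs * L)) / exp (b * ln (Cu * L))).
    { apply Rdiv_lt_0_compat; apply exp_pos. }
    assert ((a - b) / L < 0).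
    { unfold Rdiv. apply Rmult_neg_pos; [lra| apply Rinv_0_lt_compat; lra]. }
    nra.
Qed.
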